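(* Let ${\tt G}$ be a digraph with a fixed total order on its vertices, $R$ a commutative unital ring, $A$ a unital associative $R$-algebra and $M$ an $(A,A)$-bimodule. Setting $\mathcal F_{A,M}({\tt H}\preceq{\tt H}')$ to be the composite of the covering maps along any chain ${\tt H}={\tt H}_0\prec{\tt H}_1\prec\dots\prec{\tt H}_m={\tt H}'$ (and the identity when ${\tt H}={\tt H}'$) is well defined, and $\mathcal F_{A,M}\colon\mathbf P({\tt G})\to R\text{-}\mathbf{Mod}$ is a covariant functor.
   Context: A digraph ${\tt G}=(V,E)$ has finite $V$ and $E\subseteq(V\times V)\setminus\{(v,v)\}$; $s(e),t(e)$ are source and target of $e$. A multipath is a spanning subgraph (all vertices, subset of edges) each of whose components (of the underlying undirected graph) is an isolated vertex or a simple directed path. $P({\tt G})$ is the set of multipaths ordered by inclusion of edge sets, ${\tt H}\prec{\tt H}\cup e$ the covering relation (add one edge), and $\mathbf P({\tt G})$ the category with a unique morphism ${\tt H}\to{\tt H}'$ iff ${\tt H}\le{\tt H}'$. For a multipath ${\tt H}$ with components $c_0<\dots<c_k$ ordered by minimal vertex, $\mathcal F_{A,M}({\tt H})=M\otimes_R A\otimes_R\cdots\otimes_R A$ (factor $M$ for $c_0$, factor $A$ for $c_1,\dots,c_k$). For ${\tt H}\prec{\tt H}\cup e$ let $s,t$ be the indices of the components of ${\tt H}$ containing $s(e),t(e)$ (so $s\neq t$); the components of ${\tt H}\cup e$ are those of ${\tt H}$ with $c_s,c_t$ merged into one component placed at position $\min(s,t)$, the others keeping their order, and the covering map $\mathcal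 F_{A,M}({\tt H}\prec{\tt H}\cup e)$ sends $a_0\otimes\cdots\otimes a_k$ to the tensor obtained by replacing $a_s,a_t$ with the single factor $a_s\cdot a_t$ (algebra product or bimodule action) in position $\min(s,t)$. *)

(* Defs.v *)
From HB Require Import structures.
From mathcomp Require Import all_boot all_order all_algebra.
From Stdlib Require Import ClassicalEpsilon.

Set Implicit Arguments.
Unset Strict Implicit.
Unset Printing Implicit Defensive.

Import GRing.Theory.
Local Open Scope ring_scope.

(* Digraphs on the totally ordered vertex set 'I_n (order = nat order) *)

Definition digraph (n : nat) (E : {set 'I_n * 'I_n}) : Prop :=
  forall v : 'I_n, (v, v) \notin E.

Definition uadj (n : nat) (H : {set 'I_n * 'I_n}) : rel 'I_n :=
  fun u v => ((u, v) \in H) || ((v, u) \in H).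

(* H is a multipath of G = (V,E): a spanning subgraph all of whose
   (undirected) components are an isolated vertex or a simple directed
   path: the component of x is the vertex set of a duplicate-free
   sequence p, and the edges of H in it are exactly the consecutive
   pairs of p. *)
Definition multipath (n : nat) (E H : {set 'I_n * 'I_n}) : Prop :=
  H \subset E /\
  forall x : 'I_n, exists p : seq 'I_n,
    [/\ uniq p,
        (forall y, (y \in p) = connect (uadj H) x y) &
        (forall e : 'I_n * 'I_n, e.1 \in p -> (e \in H) = (e \in zip p (behead p)))].

Definition is_root (n : nat) (H : {set 'I_n * 'I_n}) (u : 'I_n) : bool :=
  [forall w, connect (uadj H) u w ==> (u <= w)%N].

Definition ncomp (n : nat) (H : {set 'I_n * 'I_n}) : nat :=
  #|[set u | is_root H u]|.

(* index (0-based, components ordered by minimal vertex) of the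
   component containing v *)
Definition comp_index (n : nat) (H : {set 'I_n * 'I_n}) (v : 'I_n) : nat :=
  #|[set u | is_root H u & [forall w, connect (uadj H) v w ==> (u < w)%N]]|.

Record bimodule (R : comNzRingType) (A : algType R) := Bimodule {
  bm_car : lmodType R;
  lact : A -> bm_car -> bm_car;
  ract : bm_car -> A -> bm_car;
  lactA : forall a b m, lact a (lact b m) = lact (a * b) m;
  lact1 : forall m, lact 1 m = m;
  ractA : forall m a b, ract (ract m a) b = ract m (a * b);
  ract1 : forall m, ract m 1 = m;
  lact_ract : forall a m b, ract (lact a m) b = lact a (ract m b);
  lact_linl : forall r a b m, lact (r *: a + b) m = r *: lact a m + lact b m;
  lact_linr : forall r a m m', lact a (r *: m + m') = r *: lact a m + lact a m';
  ract_linl : forall r m m' a, ract (r *: m + m') a = r *: ract m a + ract m' a;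
  ract_linr : forall r m a b, ract m (r *: a + b) = r *: ract m a + ract m b
}.

(* Tensor products M (x)_R A (x)_R ... (x)_R A  (k factors A),        *)
(* given by their universal property                                 *)

Definition is_linear (R : comNzRingType) (U W : lmodType R) (g : U -> W) : Prop :=
  forall (r : R) (x y : U), g (r *: x + y) = r *: g x + g y.

Definition fupd (k : nat) (T : Type) (f : {ffun 'I_k -> T}) (i : 'I_k) (x : T) :
  {ffun 'I_k -> T} := [ffun j => if j == i then x else f j].

Definition multilinear (R : comNzRingType) (M A W : lmodType R) (k : nat)
  (f : M -> {ffun 'I_k -> A} -> W) : Prop :=
  (forall as_, is_linear (fun m => f m as_)) /\
  (forall m as_ i, is_linear (fun x => f m (fupd as_ i x))).

Record tensor_power (R : comNzRingType) (M A : lmodType R) (k : nat) := TensorPower {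
  tp_car : lmodType R;
  tp_tens : M -> {ffun 'I_k -> A} -> tp_car;
  tp_multilinear : multilinear tp_tens;
  tp_universal : forall (W : lmodType R) (f : M -> {ffun 'I_k -> A} -> W),
    multilinear f ->
    exists g : tp_car -> W,
      [/\ is_linear g, (forall m as_, g (tp_tens m as_) = f m as_) &
          forall g' : tp_car -> W, is_linear g' ->
            (forall m as_, g' (tp_tens m as_) = f m as_) -> g' =1 g]
}.

Section Functor.
Variables (R : comNzRingType) (A : algType R) (M : bimodule A).
Variable tf : forall k : nat, tensor_power (bm_car M) A k.
Variable n : nat.

(* F_{A,M}(H) = M (x) A^{(x) k}, where H has k+1 components *)
Definition Fobj (H : {set 'I_n * 'I_n}) : lmodType R := tp_car (tf (ncomp H).-1).

Definition ftoseq (k : nat) (as_ : {ffun 'I_k -> A}) : seq A := [seq as_ i | i <- enum 'I_k].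
Definition seqtof (k : nat) (l : seq A) : {ffun 'I_k -> A} := [ffun j : 'I_k => nth 0 l j].

Definition rem_nth (T : Type) (i : nat) (l : seq T) : seq T := take i l ++ drop i.+1 l.

(* the pure tensor m (x) a_1 (x) ... (x) a_k, with factors indexed 0..k
   (factor 0 in M); replace a_s, a_t by a_s . a_t at position min(s,t) *)
Definition merge (s t : nat) (m : bm_car M) (l : seq A) : bm_car M * seq A :=
  if s == 0%N then (ract m (nth 0 l t.-1), rem_nth t.-1 l)
  else if t == 0%N then (lact (nth 0 l s.-1) m, rem_nth s.-1 l)
  else (m, rem_nth (maxn s t).-1
                   (set_nth 0 l (minn s t).-1 (nth 0 l s.-1 * nth 0 l t.-1))).

Definition cover_spec (H : {set 'I_n * 'I_n}) (e : 'I_n * 'I_n)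
  (g : Fobj H -> Fobj (e |: H)) : Prop :=
  is_linear g /\
  forall m as_,
    g (tp_tens (tf (ncomp H).-1) m as_) =
    let: (m', l') := merge (comp_index H e.1) (comp_index H e.2) m (ftoseq as_) in
    tp_tens (tf (ncomp (e |: H)).-1) m' (seqtof _ l').

Definition cover_map (H : {set 'I_n * 'I_n}) (e : 'I_n * 'I_n) : Fobj H -> Fobj (e |: H) :=
  epsilon (inhabits (fun _ => 0)) (cover_spec (e := e)).

(* a chain H = H_0 < H_1 < ... < H_m described by the added edges *)
Definition chain_end (H : {set 'I_n * 'I_n}) (es : seq ('I_n * 'I_n)) :=
  foldl (fun H e => e |: H) H es.

Fixpoint is_chain (E H : {set 'I_n * 'I_n}) (es : seq ('I_n * 'I_n)) : Prop :=
  match es with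
  | [::] => multipath E H
  | e :: es' => [/\ multipath E H, e \notin H & is_chain E (e |: H) es']
  end.

Fixpoint chain_comp (H : {set 'I_n * 'I_n}) (es : seq ('I_n * 'I_n)) :
  Fobj H -> Fobj (chain_end H es) :=
  match es return Fobj H -> Fobj (chain_end H es) with
  | [::] => fun x => x
  | e :: es' => fun x => chain_comp es' (cover_map e x)
  end.

End Functor.

(* Main.v *)
Require Import Defs.
From mathcomp Require Import all_boot all_order all_algebra zify.
From Stdlib Require Import ClassicalEpsilon FunctionalExtensionality.
Set Implicit Arguments. Unset Strict Implicit. Unset Printing Implicit Defensive.

Module G1.

Section Graph.
Variable n : nat.
Implicit Types (H : {set 'I_n * 'I_n}) (x y u v w : 'I_n).
Local Notation cc H := (connect (uadj H)).

Lemma uadj_sym H : symmetric (uadj H).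
Proof. by move=> u v; rewrite /uadj orbC. Qed.

Lemma cc_sym H x y : cc H x y = cc H y x.
Proof. exact: (sym_connect_sym (@uadj_sym H)). Qed.

Lemma cc_ind H (P : pred 'I_n) x y : P x -> (forall u v, P u -> uadj H u v -> P v) ->
  cc H x y -> P y.
Proof.
move=> Px IH /connectP [p pth ->]; elim: p x Px pth => //= a p IHp x Px /andP[xa pth].
exact: IHp (IH _ _ Px xa) pth.
Qed.

Definition rt H x := [arg min_(w < x | cc H x w) val w].

Lemma rtP H x : cc H x (rt H x) /\ forall w, cc H x w -> rt H x <= w.
Proof.
rewrite /rt; case: arg_minnP => [|r hr hmin]; first exact: connect0.
by split=> // w /hmin.
Qed.

Lemma rt_eq H x y : cc H x y -> rt H x = rt H y.
Proof.
move=> hxy; have [hx mx] := rtP H x; have [hy my] := rtP H y.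
have hyx : cc H y x by rewrite cc_sym.
apply/val_inj/eqP; rewrite eqn_leq mx ?my //.
  exact: connect_trans hyx hx.
exact: connect_trans hxy hy.
Qed.

Lemma ccE H x y : cc H x y = (rt H x == rt H y).
Proof.
apply/idP/eqP; first exact: rt_eq.
move=> e; have [hx _] := rtP H x; have [hy _] := rtP H y.
by apply: connect_trans hx _; rewrite e cc_sym.
Qed.

Lemma rt_idem H x : rt H (rt H x) = rt H x.
Proof. by have [h _] := rtP H x; rewrite -(rt_eq h). Qed.

Lemma cc_add H e x y : cc (e |: H) x y =
  [|| rt H x == rt H y, (rt H x == rt H e.1) && (rt H e.2 == rt H y)
    | (rt H x == rt H e.2) && (rt H e.1 == rt H y)].
Proof.
apply/idP/idP.
- move=> h; apply: (cc_ind (P := fun y => [|| rt H x == rt H y,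
     (rt H x == rt H e.1) && (rt H e.2 == rt H y)
    | (rt H x == rt H e.2) && (rt H e.1 == rt H y)]) _ _ h); first by rewrite eqxx.
  move=> u v Pu; rewrite /uadj !in_setU1.
  have Huv: uadj H u v -> rt H u = rt H v by move=> a; apply: rt_eq; apply: connect1.
  case/orP=> [/orP[/eqP ee|a]|/orP[/eqP ee|a]].
  + subst e => /=; case/or3P: Pu => [hh|/andP[hh _]|/andP[hh _]];
    by rewrite ?hh ?eqxx ?andbT ?orbT.
  + by rewrite -(Huv _) // /uadj a.
  + subst e => /=; case/or3P: Pu => [hh|/andP[hh _]|/andP[hh _]];
    by rewrite ?hh ?eqxx ?andbT ?orbT.
  + by rewrite -(Huv _) // /uadj a orbT.
- have sub: subrel (uadj H) (connect (uadj (e |: H))).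
    by move=> u v h; apply: connect1; move: h; rewrite /uadj !in_setU1 => /orP[]->; rewrite ?orbT.
  have ce: cc (e |: H) e.1 e.2 by apply: connect1; rewrite /uadj in_setU1 -surjective_pairing eqxx.
  have cs a b : rt H a = rt H b -> cc (e |: H) a b.
    by move=> h; have := @connect_sub _ _ _ sub a b; apply; rewrite ccE h.
  case/or3P=> [/eqP/cs //|/andP[/eqP h1 /eqP h2]|/andP[/eqP h1 /eqP h2]].
    by apply: connect_trans (cs _ _ h1) (connect_trans ce (cs _ _ h2)).
  apply: connect_trans (cs _ _ h1) (connect_trans _ (cs _ _ h2)).
  by rewrite (sym_connect_sym (@uadj_sym _)).
Qed.

End Graph.

End G1.
Import G1.

Module G2.

Lemma zipP (T : eqType) (p : seq T) a b : uniq p ->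
  ((a, b) \in zip p (behead p)) = [&& a \in p, b \in p & index b p == (index a p).+1].
Proof.
elim: p => [//|x p IH] /= /andP[xp up].
have -> : zip (x :: p) p = (if p is y :: _ then [:: (x, y)] else [::]) ++ zip p (behead p).
  by case: p {IH xp up}.
rewrite mem_cat IH // !inE.
case: (eqVneq x a) => [<-|xa]; case: (eqVneq x b) => [<-|xb] /=.
- rewrite (negPf xp) /= orbF; case: p xp {IH up} => //= y q.
  by rewrite !inE xpair_eqE eqxx /= => /norP[/negPf -> _].
- rewrite (negPf xp) /= orbF; case: p {IH up xp} => [|y q] //=.
  rewrite mem_seq1 xpair_eqE eqxx /= inE; case: (eqVneq y b) => [_|ne] //=.
  by rewrite andbF.
- rewrite (negPf xp) andbF /= orbF; case: p {IH up xp} => [|y q] //=.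
  by rewrite mem_seq1 xpair_eqE eq_sym (negPf xa).
- rewrite eqSS; case: p {IH up xp} => [|y q] //=.
  by rewrite mem_seq1 xpair_eqE eq_sym (negPf xa).
Qed.

Section MP.
Variable n : nat.
Implicit Types (E H : {set 'I_n * 'I_n}) (x y u v w : 'I_n).
Local Notation cc H := (connect (uadj H)).

Lemma mp_path E H x : multipath E H -> exists p : seq 'I_n,
  [/\ uniq p, (forall y, (y \in p) = cc H x y) &
      (forall e, e.1 \in p -> (e \in H) = (e \in zip p (behead p)))].
Proof. by case=> _ /(_ x). Qed.

Lemma mp_out E H y w1 w2 : multipath E H -> (y, w1) \in H -> (y, w2) \in H -> w1 = w2.
Proof.
move=> /(mp_path y) [p [up memp ed]].
have yp : y \in p by rewrite memp connect0.
rewrite !ed // !zipP // => /and3P[_ w1p /eqP i1] /and3P[_ w2p /eqP i2].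
by rewrite -(nth_index y w1p) -(nth_index y w2p) i1 i2.
Qed.

Lemma mp_in E H y w1 w2 : multipath E H -> (w1, y) \in H -> (w2, y) \in H -> w1 = w2.
Proof.
move=> /(mp_path y) [p [up memp ed]] h1 h2.
have wp w : (w, y) \in H -> w \in p.
  by move=> h; rewrite memp; apply: connect1; rewrite /uadj h orbT.
have w1p := wp _ h1; have w2p := wp _ h2.
move: h1 h2; rewrite (ed (w1, y)) // (ed (w2, y)) // !zipP // => /and3P[_ _ /eqP i1] /and3P[_ _ /eqP i2].
by rewrite -(nth_index y w1p) -(nth_index y w2p); congr nth; apply/succn_inj; rewrite -i1 -i2.
Qed.

Definition sink H y := [forall w, (y, w) \notin H].
Definition source H y := [forall w, (w, y) \notin H].

Lemma mp_sink_ex E H x : multipath E H -> exists y, cc H x y && sink H y.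
Proof.
move=> /(mp_path x) [p [up memp ed]].
have xp : x \in p by rewrite memp connect0.
have sp : 0 < size p by case: p xp {memp ed up}.
set y := nth x p (size p).-1.
have yp : y \in p by rewrite mem_nth // prednK.
exists y; rewrite -memp yp /=; apply/forallP => w; apply/negP.
rewrite ed // zipP // => /and3P[_ wp /eqP iw].
move: (index_mem w p); rewrite wp iw /y index_uniq ?prednK //.
by rewrite ltnn.
Qed.

Lemma mp_sink_uniq E H x y1 y2 : multipath E H -> cc H x y1 -> cc H x y2 ->
  sink H y1 -> sink H y2 -> y1 = y2.
Proof.
move=> /(mp_path x) [p [up memp ed]].
rewrite -!memp => y1p y2p.
suff last y : y \in p -> sink H y -> index y p = (size p).-1.
  move=> s1 s2; rewrite -(nth_index y1 y1p) -(nth_index y1 y2p).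
  by rewrite (last y1) // (last y2).
move=> yp /forallP sk.
have ilt : index y p < size p by rewrite index_mem.
case: (ltnP (index y p).+1 (size p)) => [sz|ge]; last by lia.
exfalso.
have := sk (nth y p (index y p).+1); rewrite ed // zipP // yp mem_nth // index_uniq //.
by rewrite eqxx.
Qed.

Lemma mp_source_uniq E H x y1 y2 : multipath E H -> cc H x y1 -> cc H x y2 ->
  source H y1 -> source H y2 -> y1 = y2.
Proof.
move=> /(mp_path x) [p [up memp ed]].
rewrite -!memp => y1p y2p.
suff first y : y \in p -> source H y -> index y p = 0.
  move=> s1 s2; rewrite -(nth_index y1 y1p) -(nth_index y1 y2p).
  by rewrite (first y1) // (first y2).
move=> yp /forallP sk.
case: (posnP (index y p)) => // lt.
exfalso.
have sz : (index y p).-1 < size p by apply: leq_ltn_trans (leq_pred _) _; rewrite index_mem.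
have wp : nth y p (index y p).-1 \in p by rewrite mem_nth.
have := sk (nth y p (index y p).-1); rewrite ed // zipP // yp wp index_uniq // prednK //.
by rewrite eqxx.
Qed.

End MP.

End G2.
Import G2.

Module G3.

Lemma index_filter (T : eqType) (P : pred T) (s : seq T) y : P y ->
  index y (filter P s) = count P (take (index y s) s).
Proof.
move=> Py; elim: s => [//|a s IH] /=.
case: (eqVneq a y) => [e|ay]; first by subst y; rewrite Py /= eqxx.
case Pa: (P a); rewrite /= ?(negPf ay) IH /= Pa ?add0n ?add1n //.
Qed.

Lemma count_take_mono (T : Type) (P : pred T) (s : seq T) m k : m <= k ->
  count P (take m s) <= count P (take k s).
Proof. by move=> /subnKC <-; rewrite takeD count_cat leq_addr. Qed.

Lemma count_take_succ (T : Type) (P : pred T) (s : seq T) x0 i : i < size s ->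
  count P (take i.+1 s) = count P (take i s) + P (nth x0 s i).
Proof. by move=> h; rewrite (take_nth x0 h) -cats1 count_cat /= addn0. Qed.

Section Sub.
Variable n : nat.
Implicit Types (E G S : {set 'I_n * 'I_n}) (x y u v w : 'I_n).
Local Notation cc H := (connect (uadj H)).

Lemma cc_mono G S x y : S \subset G -> cc S x y -> cc G x y.
Proof.
move=> sSG; apply: connect_sub => u v h; apply: connect1; move: h.
by rewrite /uadj => /orP[] h; rewrite (subsetP sSG _ h) ?orbT.
Qed.

Lemma mp_sub E G S : multipath E G -> S \subset G -> multipath E S.
Proof.
move=> mG sSG; split; first by apply: subset_trans sSG _; case: mG.
move=> x; have [p' [up' memp' ed']] := mp_path x mG.
pose P := [pred y | cc S x y].
exists (filter P p'); split.
- exact: filter_uniq.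
- move=> y; rewrite mem_filter /=; case h: (cc S x y) => //=.
  by rewrite memp' (cc_mono sSG h).
case=> a b /=; rewrite mem_filter /= => /andP[Pa ap'].
rewrite zipP ?filter_uniq // !mem_filter /= Pa ap' /=.
have Pbb : forall b, (a, b) \in S -> cc S x b.
  by move=> c h; apply: connect_trans Pa (connect1 _); rewrite /uadj h.
apply/idP/idP.
- move=> hS; have hG := subsetP sSG _ hS.
  move: hG; rewrite ed' // zipP // => /and3P[_ bp' /eqP ib].
  have Pb := Pbb _ hS.
  rewrite Pb bp' /= !index_filter //= ib (count_take_succ _ a) ?index_mem //.
  by rewrite nth_index //= Pa addn1.
- case/andP=> /andP[Pb bp'] /eqP.
  rewrite !index_filter //= => ib.
  set ia := index a p' in ib *; set jb := index b p' in ib *.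
  have iaj : ia < jb.
    rewrite ltnNge; apply/negP => h; have := count_take_mono P p' h.
    by rewrite ib ltnn.
  have jbs : jb < size p' by rewrite index_mem.
  have ias : ia.+1 < size p' by apply: leq_ltn_trans jbs.
  set w := nth a p' ia.+1.
  have wp' : w \in p' by rewrite mem_nth.
  have iw : index w p' = ia.+1 by rewrite index_uniq.
  have awG : (a, w) \in G by rewrite ed' // zipP // ap' wp' iw eqxx.
  case hw: ((a, w) \in S).
    have Pw := Pbb _ hw.
    have c2 : count P (take ia.+2 p') = (count P (take ia p')).+2.
      rewrite (count_take_succ _ a) // (count_take_succ _ a) ?(ltnW ias) //.
      by rewrite /= nth_index //= -/w /= Pa Pw /=; lia.
    have jeq : jb = ia.+1.
      apply/eqP; rewrite eqn_leq iaj andbT leqNgt; apply/negP => h.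
      by have := count_take_mono P p' h; rewrite c2 ib ltnn.
    suff -> : b = w by [].
    by rewrite /w -jeq /jb nth_index.
  have cl : forall y, cc S a y -> (y \in p') && (index y p' <= ia).
    move=> y; apply: (@cc_ind _ S (fun y => (y \in p') && (index y p' <= ia)) a y); first by rewrite ap' leqnn.
    move=> u v /andP[up iu]; rewrite /uadj => /orP[] h; have hG := subsetP sSG _ h.
    + move: hG; rewrite ed' // zipP // => /and3P[_ vp /eqP iv].
      rewrite vp iv /=; rewrite leq_eqVlt in iu; case/orP: iu => [/eqP iu|//].
      exfalso; move: h; have -> : u = a by rewrite -(nth_index a up) iu /ia nth_index.
      have -> : v = w by rewrite -(nth_index a vp) iv iu.
      by rewrite hw.
    + have vp : v \in p'.
        rewrite memp'; apply: connect_trans (_ : cc G x u) _.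
          by rewrite -memp'.
        by apply: connect1; rewrite /uadj hG orbT.
      move: hG; rewrite ed' // zipP // => /and3P[_ _ /eqP iv].
      by rewrite vp /=; apply: leq_trans iu; rewrite iv.
  have cab : cc S a b.
    by apply: connect_trans _ Pb; rewrite (sym_connect_sym (@uadj_sym _ _)).
  by have := cl _ cab => /andP[_]; rewrite leqNgt iaj.
Qed.

End Sub.

End G3.
Import G3.

Module G4.

Section CI.
Variable n : nat.
Implicit Types (E H : {set 'I_n * 'I_n}) (x y u v w r : 'I_n).
Local Notation cc H := (connect (uadj H)).

Lemma rt_le H x : rt H x <= x.
Proof. by have [_ h] := rtP H x; apply: h; exact: connect0. Qed.

Lemma rt_char H x r : cc H x r -> (forall w, cc H x w -> r <= w) -> rt H x = r.
Proof.
move=> hr hm; have [h1 h2] := rtP H x.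
by apply/val_inj/eqP; rewrite eqn_leq h2 // hm.
Qed.

Lemma is_rootE H u : is_root H u = (rt H u == u).
Proof.
apply/forallP/eqP => [h|e w].
  apply: rt_char; first exact: connect0.
  by move=> w cw; have := h w; rewrite cw.
apply/implyP => cw; have [_ h2] := rtP H u.
by rewrite -{1}e h2.
Qed.

Definition cnt H (r : nat) := #|[set u | (rt H u == u) & (u < r)%N]|.

Lemma ciE H v : comp_index H v = cnt H (rt H v).
Proof.
rewrite /comp_index /cnt; apply: eq_card => u; rewrite !inE is_rootE; congr andb.
apply/forallP/idP => [h|lt w].
  by have := h (rt H v); rewrite (proj1 (rtP H v)).
apply/implyP => cw; apply: leq_trans lt _; exact: (proj2 (rtP H v)).
Qed.

Lemma ncompE H : ncomp H = #|[set u | rt H u == u]|.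
Proof. by apply: eq_card => u; rewrite !inE is_rootE. Qed.

Lemma cnt_mono H (r1 r2 : nat) : r1 <= r2 -> cnt H r1 <= cnt H r2.
Proof.
move=> le; apply: subset_leq_card; apply/subsetP => u; rewrite !inE => /andP[-> l].
exact: leq_trans l le.
Qed.

Lemma cnt_strict H r1 r2 : rt H r1 = r1 -> r1 < r2 -> cnt H r1 < cnt H r2.
Proof.
move=> h1 lt; apply: proper_card; rewrite properE; apply/andP; split.
  apply/subsetP => u; rewrite !inE => /andP[-> l]; exact: ltn_trans l lt.
apply/subsetPn; exists r1; rewrite !inE ?h1 ?eqxx ?ltnn //.
Qed.

Lemma cnt_ltE H r1 r2 : rt H r1 = r1 -> rt H r2 = r2 -> (cnt H r1 < cnt H r2) = (r1 < r2).
Proof.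
move=> h1 h2; apply/idP/idP; last exact: cnt_strict.
rewrite ltnNge => /negP h; rewrite ltnNge; apply/negP => le; apply: h.
exact: cnt_mono.
Qed.

Lemma cnt_eqE H r1 r2 : rt H r1 = r1 -> rt H r2 = r2 -> (cnt H r1 == cnt H r2) = (r1 == r2).
Proof.
move=> h1 h2; apply/idP/idP => [/eqP e|/eqP-> //].
case: (ltngtP r1 r2) => [lt|lt|e2]; last by apply/eqP/val_inj.
  by have := cnt_strict h1 lt; rewrite e ltnn.
by have := cnt_strict h2 lt; rewrite e ltnn.
Qed.

Lemma ci_lt H v : comp_index H v < ncomp H.
Proof.
rewrite ciE ncompE; apply: proper_card; rewrite properE; apply/andP; split.
  by apply/subsetP => u; rewrite !inE => /andP[].
apply/subsetPn; exists (rt H v); rewrite !inE ?rt_idem ?eqxx ?ltnn //.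
Qed.

Lemma ci_surj H i : i < ncomp H -> exists v, comp_index H v = i.
Proof.
move=> lt; set s := [seq cnt H (val u) | u <- enum [set u | rt H u == u]].
suff : i \in s.
  by case/mapP => u; rewrite mem_enum inE => /eqP ru ->; exists u; rewrite ciE ru.
apply/negP => ni.
have us : uniq s.
  rewrite map_inj_in_uniq ?enum_uniq // => u1 u2; rewrite !mem_enum !inE => /eqP r1 /eqP r2.
  by move/eqP; rewrite cnt_eqE // => /eqP.
have : size s <= size [seq j <- iota 0 (ncomp H) | j != i].
  apply: uniq_leq_size => // j js; rewrite mem_filter mem_iota /= add0n.
  apply/andP; split; first by apply/negP => /eqP ji; subst j; rewrite js in ni.
  case/mapP: js => u; rewrite mem_enum inE => /eqP ru ->.
  by have := ci_lt H u; rewrite ciE ru.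
rewrite size_map -cardE -ncompE.
have : count (fun j => j != i) (iota 0 (ncomp H)) < ncomp H.
  have -> : count (fun j => j != i) (iota 0 (ncomp H)) = count (predC (pred1 i)) (iota 0 (ncomp H)).
    by apply: eq_count.
  have c1 : count (pred1 i) (iota 0 (ncomp H)) = 1 by rewrite count_uniq_mem ?iota_uniq // mem_iota lt.
  have := count_predC (pred1 i) (iota 0 (ncomp H)); rewrite c1 size_iota; lia.
by rewrite size_filter => h1 h2; have := leq_ltn_trans h2 h1; rewrite ltnn.
Qed.

End CI.

End G4.
Import G4.

Module G5.

Section Add.
Variable n : nat.
Implicit Types (E H : {set 'I_n * 'I_n}) (x y u v w r : 'I_n).
Local Notation cc H := (connect (uadj H)).

Variables (H : {set 'I_n * 'I_n}) (e : 'I_n * 'I_n).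
Hypothesis ne : rt H e.1 != rt H e.2.
Let ra := rt H e.1.
Let rb := rt H e.2.
Definition lo_ := if (ra < rb)%N then ra else rb.
Definition hi_ := if (ra < rb)%N then rb else ra.
Let inPQ x := (rt H x == ra) || (rt H x == rb).

Lemma rta : rt H ra = ra. Proof. exact: rt_idem. Qed.
Lemma rtb : rt H rb = rb. Proof. exact: rt_idem. Qed.
Lemma rtlo : rt H lo_ = lo_. Proof. by rewrite /lo_; case: ifP => _; rewrite rt_idem. Qed.
Lemma rthi : rt H hi_ = hi_. Proof. by rewrite /hi_; case: ifP => _; rewrite rt_idem. Qed.
Lemma lo_a : lo_ <= ra. Proof. by rewrite /lo_; case: ifP => [_|/negbT]; rewrite ?leqnn // -leqNgt. Qed.
Lemma lo_b : lo_ <= rb. Proof. by rewrite /lo_; case: ifP => [/ltnW|_] //. Qed.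
Lemma lo_hi : lo_ != hi_.
Proof. by rewrite /lo_ /hi_; case: ifP => _; rewrite // eq_sym. Qed.
Lemma lohi_le : lo_ <= hi_.
Proof. by rewrite /lo_ /hi_; case: ifP => [/ltnW //|/negbT]; rewrite -leqNgt. Qed.
Lemma lohi_cases : (lo_ == ra) && (hi_ == rb) || (lo_ == rb) && (hi_ == ra).
Proof. by rewrite /lo_ /hi_; case: ifP; rewrite !eqxx ?orbT. Qed.

Lemma rt_add x : rt (e |: H) x = if inPQ x then lo_ else rt H x.
Proof.
have rw := rt_le H.
apply: rt_char; rewrite /inPQ.
- rewrite cc_add; case: ifP => [h|_]; last by rewrite rt_idem eqxx.
  rewrite rtlo -/ra -/rb; case/orP: lohi_cases => /andP[/eqP -> _];
  by case/orP: h => ->; rewrite ?eqxx ?orbT ?andbT.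
- move=> w; rewrite cc_add -/ra -/rb; case: ifP => [h|h] cw.
    have hw : (rt H w == ra) || (rt H w == rb).
      move: cw; case/orP: h => /eqP ->;
      case/or3P => [/eqP<-|/andP[_ /eqP<-]|/andP[_ /eqP<-]]; by rewrite ?eqxx ?orbT.
    case/orP: hw => /eqP hw.
      by apply: leq_trans lo_a _; rewrite -hw rw.
    by apply: leq_trans lo_b _; rewrite -hw rw.
  move/negbT: h; rewrite negb_or => /andP[/negPf h1 /negPf h2].
  by move: cw; rewrite h1 h2 /= orbF => /eqP ->; rewrite rw.
Qed.

Lemma root_add u : (rt (e |: H) u == u) = (rt H u == u) && (u != hi_).
Proof.
rewrite rt_add /inPQ; case: ifP => h.
  apply/eqP/andP => [<-|[/eqP r uh]]; first by rewrite rtlo lo_hi.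
  move: h; rewrite r -/ra -/rb; case/orP: lohi_cases => /andP[/eqP l /eqP hh];
  case/orP=> /eqP e1; move: uh; rewrite hh l e1 ?eqxx //.
case: eqVneq => //= ru; apply/esym/negP => /eqP uh.
by move: h; rewrite ru uh; case/orP: lohi_cases => /andP[_ /eqP ->]; rewrite eqxx ?orbT.
Qed.

Lemma cnt_add (r : nat) : cnt (e |: H) r = cnt H r - (hi_ < r).
Proof.
rewrite /cnt (cardsD1 hi_ [set u | (rt H u == u) & (u < r)%N]) inE rthi eqxx /=.
rewrite addKn; apply: eq_card => u; rewrite !inE root_add; case: eqVneq => //=.
by rewrite andbF.
Qed.

Lemma ncomp_add : ncomp (e |: H) = (ncomp H).-1.
Proof.
rewrite !ncompE (cardsD1 hi_ [set u | rt H u == u]) inE rthi eqxx add1n /=.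
by apply: eq_card => u; rewrite !inE root_add andbC.
Qed.

Lemma ci_st : comp_index H e.1 != comp_index H e.2.
Proof. by rewrite !ciE cnt_eqE ?rt_idem. Qed.

Lemma ci_add v : comp_index (e |: H) v =
  if inPQ v then minn (comp_index H e.1) (comp_index H e.2)
  else if (maxn (comp_index H e.1) (comp_index H e.2) < comp_index H v)%N
       then (comp_index H v).-1 else comp_index H v.
Proof.
rewrite ciE rt_add cnt_add !ciE -/ra -/rb.
have mx : maxn (cnt H ra) (cnt H rb) = cnt H hi_.
  rewrite /hi_; case: ifP => h.
    by apply/maxn_idPr/cnt_mono/ltnW.
  by apply/maxn_idPl/cnt_mono; rewrite leqNgt h.
have mn : minn (cnt H ra) (cnt H rb) = cnt H lo_.
  rewrite /lo_; case: ifP => h.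
    by apply/minn_idPl/cnt_mono/ltnW.
  by apply/minn_idPr/cnt_mono; rewrite leqNgt h.
case: ifP => h.
  by rewrite ltnNge lohi_le subn0 mn.
rewrite mx cnt_ltE ?rthi ?rt_idem //; case: ifP => _; by rewrite ?subn0 ?subn1.
Qed.

End Add.

Section Zero.
Variable n : nat.
Implicit Types (E H : {set 'I_n * 'I_n}) (x y u v w r : 'I_n).

Lemma ci0 H v (z : 'I_n) : val z = 0 -> (comp_index H v == 0) = (rt H v == rt H z).
Proof.
move=> z0; have rz : rt H z = z.
  by apply/val_inj/eqP; rewrite z0 -leqn0 -z0; exact: rt_le.
rewrite ciE rz; case: (eqVneq (rt H v) z) => [->|nz]; first by rewrite /cnt z0; apply/eqP/eq_card0 => u; rewrite !inE andbF.
apply/negbTE; rewrite -lt0n.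
have : cnt H z < cnt H (rt H v).
  apply: cnt_strict => //; rewrite z0 lt0n; apply/negP => /eqP h; move/eqP: nz; apply; apply/val_inj; by rewrite /= h z0.
by apply: leq_trans.
Qed.

End Zero.

End G5.
Import G5.

Module G6.

Section Imp.
Variable n : nat.
Implicit Types (E G H : {set 'I_n * 'I_n}) (x y u v w r : 'I_n) (e f : 'I_n * 'I_n).
Local Notation cc H := (connect (uadj H)).

Lemma sink_of E G H e : multipath E G -> e \in G -> e \notin H -> H \subset G -> sink H e.1.
Proof.
move=> mG eG eH sHG; apply/forallP => w; apply/negP => h.
have := mp_out mG (subsetP sHG _ h) (_ : (e.1, e.2) \in G); rewrite -surjective_pairing => /(_ eG) ew.
by move: h; rewrite ew -surjective_pairing (negPf eH).
Qed.

Lemma source_of E G H e : multipath E G -> e \in G -> e \notin H -> H \subset G -> source H e.2.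
Proof.
move=> mG eG eH sHG; apply/forallP => w; apply/negP => h.
have := mp_in mG (subsetP sHG _ h) (_ : (e.1, e.2) \in G); rewrite -surjective_pairing => /(_ eG) ew.
by move: h; rewrite ew -surjective_pairing (negPf eH).
Qed.

Lemma sink_sub H G y : H \subset G -> sink G y -> sink H y.
Proof.
move=> s /forallP h; apply/forallP => w; apply/negP => hw.
by have := h w; rewrite (subsetP s _ hw).
Qed.

Lemma no_intra E H e : multipath E H -> multipath E (e |: H) -> e \notin H ->
  rt H e.1 != rt H e.2.
Proof.
move=> mH mG eH; apply/negP => /eqP r12.
have sHG : H \subset e |: H by apply: subsetUr.
have eG : e \in e |: H by rewrite setU11.
have [y /andP[cy sy]] := mp_sink_ex e.1 mG.
have cy' : cc H e.1 y.
  by move: cy; rewrite cc_add ccE -r12; case/or3P => // /andP[_ /eqP <-]; rewrite ?r12 eqxx.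
have ye := mp_sink_uniq mH (connect0 _ e.1) cy' (sink_of mG eG eH sHG) (sink_sub sHG sy).
by move/forallP: sy => /(_ e.2); rewrite -ye -surjective_pairing eG.
Qed.

Section Two.
Variables (E H : {set 'I_n * 'I_n}) (e f : 'I_n * 'I_n).
Hypotheses (mH : multipath E H) (mG : multipath E (f |: (e |: H))).
Hypotheses (eH : e \notin H) (fH : f \notin H) (ef : e != f).
Let G := f |: (e |: H).
Let sHG : H \subset G. Proof. by rewrite /G setUA subsetUr. Qed.
Let eG : e \in G. Proof. by rewrite /G !inE eqxx orbT. Qed.
Let fG : f \in G. Proof. by rewrite /G !inE eqxx. Qed.

Lemma no_same_src : rt H e.1 != rt H f.1.
Proof.
apply/negP => r; rewrite -ccE in r.
have := mp_sink_uniq mH (connect0 _ e.1) r (sink_of mG eG eH sHG) (sink_of mG fG fH sHG).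
move=> e1.
have := mp_out mG (_ : (e.1, e.2) \in G) (_ : (e.1, f.2) \in G).
rewrite -surjective_pairing => /(_ eG); rewrite e1 -surjective_pairing => /(_ fG) e2.
by move: ef; rewrite [e]surjective_pairing [f]surjective_pairing e1 e2 eqxx.
Qed.

Lemma no_same_tgt : rt H e.2 != rt H f.2.
Proof.
apply/negP => r; rewrite -ccE in r.
have := mp_source_uniq mH (connect0 _ e.2) r (source_of mG eG eH sHG) (source_of mG fG fH sHG).
move=> e2.
have := mp_in mG (_ : (e.1, e.2) \in G) (_ : (f.1, e.2) \in G).
rewrite -surjective_pairing => /(_ eG); rewrite e2 -surjective_pairing => /(_ fG) e1.
by move: ef; rewrite [e]surjective_pairing [f]surjective_pairing e1 e2 eqxx.
Qed.

Lemma no_cycle2 : rt H e.1 != rt H e.2 ->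
  ~~ ((rt H e.1 == rt H f.2) && (rt H e.2 == rt H f.1)).
Proof.
move=> ne; apply/negP => /andP[/eqP a /eqP b].
have [y /andP[cy sy]] := mp_sink_ex e.1 mG.
have iy : (rt H y == rt H e.1) || (rt H y == rt H e.2).
  move: cy; rewrite cc_add !rt_add -a -b !eqxx ?orbT /=.
  have lo2 := lohi_cases H e.
  case: ifP => // /negbT; rewrite negb_or => /andP[h1 h2].
  move=> hh; have : lo_ H e == rt H y by case/or3P: hh => // /andP[].
  by case/orP: lo2 => /andP[/eqP-> _]; rewrite eq_sym ?(negPf h1) ?(negPf h2).
have syH := sink_sub sHG sy.
case/orP: iy => /eqP ry.
- have cy' : cc H e.1 y by rewrite ccE ry.
  have ye := mp_sink_uniq mH (connect0 _ e.1) cy' (sink_of mG eG eH sHG) syH.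
  by move/forallP: sy => /(_ e.2); rewrite -ye -surjective_pairing eG.
- have cy' : cc H f.1 y by rewrite ccE ry b.
  have ye := mp_sink_uniq mH (connect0 _ f.1) cy' (sink_of mG fG fH sHG) syH.
  by move/forallP: sy => /(_ f.2); rewrite -ye -surjective_pairing fG.
Qed.

End Two.
End Imp.

End G6.
Import G6.

Module A1.
Import GRing.Theory.
Local Open Scope ring_scope.

Definition bump' (p j : nat) := if (j < p)%N then j else j.+1.

Lemma nth_rem (T : Type) (x0 : T) p (l : seq T) j :
  nth x0 (rem_nth p l) j = nth x0 l (bump' p j).
Proof.
rewrite /rem_nth /bump'; case: (ltnP p (size l)) => hp.
  rewrite nth_cat size_take hp.
  case: ltnP => hj; first by rewrite nth_take.
  by rewrite nth_drop; congr nth; lia.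
rewrite take_oversize // drop_oversize ?(leq_trans hp) // cats0.
case: ltnP => hj //; rewrite !nth_default //; lia.
Qed.

Lemma size_rem (T : Type) p (l : seq T) : (p < size l)%N -> size (rem_nth p l) = (size l).-1.
Proof.
move=> h; rewrite /rem_nth size_cat size_take h size_drop; lia.
Qed.

Section Merge.
Variables (R : comNzRingType) (A : algType R) (M : bimodule A).
Local Notation Mc := (bm_car M).

Lemma merge_nth s t (m : Mc) (l : seq A) j :
  nth 0 (Defs.merge s t m l).2 j =
  if s == 0%N then nth 0 l (bump' t.-1 j)
  else if t == 0%N then nth 0 l (bump' s.-1 j)
  else if bump' (maxn s t).-1 j == (minn s t).-1 then nth 0 l s.-1 * nth 0 l t.-1
  else nth 0 l (bump' (maxn s t).-1 j).
Proof.
rewrite /Defs.merge; case: ifP => _ /=; first by rewrite nth_rem.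
case: ifP => _ /=; first by rewrite nth_rem.
by rewrite nth_rem nth_set_nth /=.
Qed.

Lemma merge_m s t (m : Mc) (l : seq A) :
  (Defs.merge s t m l).1 =
  if s == 0%N then ract m (nth 0 l t.-1)
  else if t == 0%N then lact (nth 0 l s.-1) m else m.
Proof. by rewrite /Defs.merge; case: ifP => //; case: ifP. Qed.

Lemma merge_size s t (m : Mc) (l : seq A) : s != t -> (s <= size l)%N -> (t <= size l)%N ->
  size (Defs.merge s t m l).2 = (size l).-1.
Proof.
move=> st hs ht; rewrite /Defs.merge; case: ifP => [/eqP s0|s0] /=.
  by rewrite size_rem //; subst s; lia.
case: ifP => [/eqP t0|t0] /=; first by rewrite size_rem //; lia.
rewrite size_rem size_set_nth; first by congr predn; lia.
by lia.
Qed.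

End Merge.

Section MergeLin.
Variables (R : comNzRingType) (A : algType R) (M : bimodule A).
Local Notation Mc := (bm_car M).

Lemma lin_mulr (b : A) : is_linear (fun x : A => x * b).
Proof. by move=> r x y /=; rewrite mulrDl scalerAl. Qed.
Lemma lin_mull (a : A) : is_linear (fun x : A => a * x).
Proof. by move=> r x y /=; rewrite mulrDr scalerAr. Qed.
Lemma lin_id (U : lmodType R) : is_linear (fun x : U => x).
Proof. by []. Qed.
Lemma lin_ract (m : Mc) : is_linear (fun x : A => ract m x).
Proof. by move=> r x y; rewrite ract_linr. Qed.
Lemma lin_lact (m : Mc) : is_linear (fun x : A => lact x m).
Proof. by move=> r x y; rewrite lact_linl. Qed.

Lemma merge_2m s t (m1 m2 : Mc) (l : seq A) : (Defs.merge s t m1 l).2 = (Defs.merge s t m2 l).2.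
Proof. by rewrite /Defs.merge; case: ifP => //; case: ifP. Qed.

Lemma merge_1lin s t (r : R) (m1 m2 : Mc) (l : seq A) :
  (Defs.merge s t (r *: m1 + m2) l).1 = r *: (Defs.merge s t m1 l).1 + (Defs.merge s t m2 l).1.
Proof. by rewrite !merge_m; case: ifP => _; [rewrite ract_linl|case: ifP => _; rewrite ?lact_linr]. Qed.

Ltac icases := repeat (match goal with |- context [if ?c then _ else _] =>
  lazymatch c with context[if _ then _ else _] => fail | _ => case: (boolP c) => /= ? end end).
Ltac ifin := first [ by [] | (exfalso; lia) | (congr nth; lia) ].

Lemma merge_lin s t (m : Mc) (l0 : seq A) (i : nat) (lx : A -> seq A) :
  s != t -> (s <= size l0)%N -> (t <= size l0)%N -> (i < size l0)%N ->
  (forall x j, nth 0 (lx x) j = if j == i then x else nth 0 l0 j) ->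
  (exists mu : A -> Mc, is_linear mu /\ forall x, (Defs.merge s t m (lx x)).1 = mu x /\
       forall j, nth 0 (Defs.merge s t m (lx x)).2 j = nth 0 (Defs.merge s t m l0).2 j)
  \/ (exists j0 (phi : A -> A), (j0 < (size l0).-1)%N /\ is_linear phi /\
       forall x, (Defs.merge s t m (lx x)).1 = (Defs.merge s t m l0).1 /\
       forall j, nth 0 (Defs.merge s t m (lx x)).2 j =
                 if j == j0 then phi x else nth 0 (Defs.merge s t m l0).2 j).
Proof.
move=> st hs ht hi hlx.
case: (eqVneq s 0%N) => [s0|s0].
  subst s; case: (eqVneq i t.-1) => [it|it].
    left; exists (fun x => ract m x); split; first exact: lin_ract.
    move=> x; rewrite !merge_m eqxx hlx it eqxx; split=> // j.
    by rewrite !merge_nth eqxx !hlx /bump'; icases; ifin.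
  right; exists (if (i < t.-1)%N then i else i.-1), (fun x => x); split; first by icases; lia.
  split; first exact: lin_id.
  move=> x; rewrite !merge_m eqxx hlx eq_sym (negPf it); split=> // j.
  by rewrite !merge_nth eqxx !hlx /bump'; icases; ifin.
case: (eqVneq t 0%N) => [t0|t0].
  subst t; case: (eqVneq i s.-1) => [it|it].
    left; exists (fun x => lact x m); split; first exact: lin_lact.
    move=> x; rewrite !merge_m (negPf s0) eqxx hlx it eqxx; split=> // j.
    by rewrite !merge_nth (negPf s0) eqxx !hlx /bump'; icases; ifin.
  right; exists (if (i < s.-1)%N then i else i.-1), (fun x => x); split; first by icases; lia.
  split; first exact: lin_id.
  move=> x; rewrite !merge_m (negPf s0) eqxx hlx eq_sym (negPf it); split=> // j.
  by rewrite !merge_nth (negPf s0) eqxx !hlx /bump'; icases; ifin.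
right.
case: (eqVneq i s.-1) => [iS|iS].
  exists (minn s t).-1, (fun x => x * nth 0 l0 t.-1); split; first by lia.
  split; first exact: lin_mulr.
  move=> x; rewrite !merge_m (negPf s0) (negPf t0); split=> // j.
  rewrite !merge_nth (negPf s0) (negPf t0) !hlx /bump'.
  have ti : t.-1 != i by rewrite iS; apply/negP => /eqP; lia.
  rewrite (negPf ti) iS eqxx; icases; ifin.
case: (eqVneq i t.-1) => [it|it].
  exists (minn s t).-1, (fun x => nth 0 l0 s.-1 * x); split; first by lia.
  split; first exact: lin_mull.
  move=> x; rewrite !merge_m (negPf s0) (negPf t0); split=> // j.
  rewrite !merge_nth (negPf s0) (negPf t0) !hlx /bump'.
  have si : (s.-1 == i) = false by rewrite eq_sym (negPf iS).
  rewrite si it eqxx; icases; ifin.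
exists (if (i < (maxn s t).-1)%N then i else i.-1), (fun x => x); split; first by icases; lia.
split; first exact: lin_id.
move=> x; rewrite !merge_m (negPf s0) (negPf t0); split=> // j.
rewrite !merge_nth (negPf s0) (negPf t0) !hlx /bump'.
have si : (s.-1 == i) = false by rewrite eq_sym (negPf iS).
have ti : (t.-1 == i) = false by rewrite eq_sym (negPf it).
rewrite si ti; icases; ifin.
Qed.

End MergeLin.

End A1.
Import A1.

Module A2.
Import GRing.Theory.
Local Open Scope ring_scope.

Section Tens.
Variables (R : comNzRingType) (A : algType R) (M : bimodule A).
Variable tf : forall k : nat, tensor_power (bm_car M) A k.
Local Notation Mc := (bm_car M).

Lemma lin_comp (U V W : lmodType R) (f : U -> V) (g : V -> W) :
  is_linear f -> is_linear g -> is_linear (fun x => g (f x)).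
Proof. by move=> hf hg r x y; rewrite hf hg. Qed.

Lemma lin_ext (U W : lmodType R) (f g : U -> W) : (forall x, f x = g x) -> is_linear g -> is_linear f.
Proof. by move=> e h r x y; rewrite !e h. Qed.

Lemma seqtof_nth k (l : seq A) (j : 'I_k) : seqtof k l j = nth 0 l j.
Proof. by rewrite ffunE. Qed.

Lemma size_ftoseq k (as_ : {ffun 'I_k -> A}) : size (ftoseq as_) = k.
Proof. by rewrite size_map size_enum_ord. Qed.

Lemma ftoseq_nth k (as_ : {ffun 'I_k -> A}) (j : 'I_k) : nth 0 (ftoseq as_) j = as_ j.
Proof. by rewrite /ftoseq (nth_map j) ?size_enum_ord // nth_ord_enum. Qed.

Lemma ftoseq_fupd k (as_ : {ffun 'I_k -> A}) (i : 'I_k) x j :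
  nth 0 (ftoseq (fupd as_ i x)) j = if j == i then x else nth 0 (ftoseq as_) j.
Proof.
case: (ltnP j k) => hj.
  have -> : j = Ordinal hj by [].
  by rewrite !ftoseq_nth /fupd ffunE.
rewrite !nth_default ?size_ftoseq //; case: eqP => // e.
by have := ltn_ord i; rewrite -e ltnNge hj.
Qed.

Lemma ftoseq_seqtof k (l : seq A) : size l = k -> ftoseq (seqtof k l) = l.
Proof.
move=> sl; apply: (eq_from_nth (x0 := 0)); first by rewrite size_ftoseq.
move=> j; rewrite size_ftoseq => hj.
by have -> : j = Ordinal hj by []; rewrite ftoseq_nth seqtof_nth.
Qed.

Lemma seqtof_ext k (l1 l2 : seq A) : (forall j, nth 0 l1 j = nth 0 l2 j) -> seqtof k l1 = seqtof k l2.
Proof. by move=> h; apply/ffunP => j; rewrite !ffunE h. Qed.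

Definition cover_fun (s t k' : nat) (m : Mc) (l : seq A) :=
  tp_tens (tf k') (Defs.merge s t m l).1 (seqtof k' (Defs.merge s t m l).2).

Lemma cover_ml s t k k' : s != t -> (s <= k)%N -> (t <= k)%N -> k' = k.-1 ->
  multilinear (fun m (as_ : {ffun 'I_k -> A}) => cover_fun s t k' m (ftoseq as_)).
Proof.
move=> st hs ht hk; have [ml1 ml2] := tp_multilinear (tf k'); split.
  move=> as_ r m1 m2; rewrite /cover_fun merge_1lin (merge_2m _ _ (r *: m1 + m2) m1).
  by rewrite (merge_2m _ _ m2 m1) ml1.
move=> m as_ i.
have := @merge_lin R A M s t m (ftoseq as_) i (fun x => ftoseq (fupd as_ i x)).
rewrite size_ftoseq => /(_ st hs ht (ltn_ord i) (ftoseq_fupd as_ i)).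
case=> [[mu [lmu hmu]]|[j0 [phi [hj0' [lphi hphi]]]]].
  apply: (lin_ext (g := fun x => tp_tens (tf k') (mu x) (seqtof k' (Defs.merge s t m (ftoseq as_)).2))).
    move=> x; rewrite /cover_fun (proj1 (hmu x)); congr tp_tens.
    by apply: seqtof_ext => j; rewrite (proj2 (hmu x)).
  exact: lin_comp lmu (ml1 _).
have hj0 : (j0 < k')%N by rewrite hk.
set L := (Defs.merge s t m (ftoseq as_)).
apply: (lin_ext (g := fun x => tp_tens (tf k') L.1 (fupd (seqtof k' L.2) (Ordinal hj0) (phi x)))).
  move=> x; rewrite /cover_fun (proj1 (hphi x)); congr tp_tens.
  apply/ffunP => j; rewrite !ffunE (proj2 (hphi x)) /=.
  by rewrite -val_eqE.
exact: lin_comp lphi (ml2 _ _ _).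
Qed.

End Tens.

End A2.
Import A2.

Module A3.
Import GRing.Theory.
Local Open Scope ring_scope.

Section Step.
Variables (R : comNzRingType) (A : algType R) (M : bimodule A).
Variable tf : forall k : nat, tensor_power (bm_car M) A k.
Variable n : nat.
Local Notation Mc := (bm_car M).
Implicit Types (H : {set 'I_n * 'I_n}) (e : 'I_n * 'I_n).

Lemma cover_ok H e : rt H e.1 != rt H e.2 -> cover_spec (cover_map (tf := tf) (H := H) e).
Proof.
move=> ne; rewrite /cover_map; apply: epsilon_spec.
have st := ci_st ne.
have hs : (comp_index H e.1 <= (ncomp H).-1)%N by have := ci_lt H e.1; lia.
have ht : (comp_index H e.2 <= (ncomp H).-1)%N by have := ci_lt H e.2; lia.
have hk : (ncomp (e |: H)).-1 = ((ncomp H).-1).-1 by rewrite (ncomp_add ne).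
have ml := cover_ml tf st hs ht hk.
have [g [lg hg _]] := tp_universal (tf (ncomp H).-1) ml.
exists g; split=> // m as_; rewrite hg /cover_fun.
by case: (Defs.merge _ _ _ _).
Qed.

Definition mergeV H e (st : Mc * ('I_n -> A)) : Mc * ('I_n -> A) :=
  (if comp_index H e.1 == 0%N then ract st.1 (st.2 e.2)
   else if comp_index H e.2 == 0%N then lact (st.2 e.1) st.1 else st.1,
   fun v => if (rt H v == rt H e.1) || (rt H v == rt H e.2) then st.2 e.1 * st.2 e.2 else st.2 v).

Definition RelL H (l : seq A) (sg : 'I_n -> A) :=
  size l = (ncomp H).-1 /\
  forall v, (0 < comp_index H v)%N -> nth 0 l (comp_index H v).-1 = sg v.

Definition Rep H (x : Fobj tf H) (st : Mc * ('I_n -> A)) :=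
  exists l, RelL H l st.2 /\ x = tp_tens (tf (ncomp H).-1) st.1 (seqtof _ l).

Definition Inv H (sg : 'I_n -> A) := forall u v, rt H u = rt H v -> sg u = sg v.

Lemma ci_eqE H u v : (comp_index H u == comp_index H v) = (rt H u == rt H v).
Proof. by rewrite !ciE cnt_eqE ?rt_idem. Qed.

Ltac icases := repeat (match goal with |- context [if ?c then _ else _] =>
  lazymatch c with context[if _ then _ else _] => fail | _ => case: (boolP c) => /= ? end end).

Lemma step_rep H e (x : Fobj tf H) st : rt H e.1 != rt H e.2 -> Rep x st ->
  Rep (cover_map (tf := tf) e x) (mergeV H e st).
Proof.
move=> ne [l [[sl rel] ->]]; have [_ cs] := cover_ok ne.
rewrite cs ftoseq_seqtof // (surjective_pairing (Defs.merge _ _ _ _)) /=.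
have dst := ci_st ne.
have hs := ci_lt H e.1; have ht := ci_lt H e.2.
set s := comp_index H e.1 in dst hs ht *; set t := comp_index H e.2 in dst hs ht *.
exists (Defs.merge s t st.1 l).2; split; last first.
  congr tp_tens; rewrite merge_m /mergeV /= -/s -/t.
  case: eqP => [s0|s0]; first by rewrite rel //; lia.
  by case: eqP => [t0|t0] //; rewrite rel //; lia.
split.
  by rewrite merge_size ?sl ?(ncomp_add ne) //; lia.
move=> v; rewrite /mergeV /= (ci_add ne) -/s -/t.
case: ifP => inv.
  move=> pos; rewrite merge_nth.
  have s0 : s != 0%N by apply/negP => /eqP; lia.
  have t0 : t != 0%N by apply/negP => /eqP; lia.
  rewrite (negPf s0) (negPf t0) /bump'.
  have -> : ((minn s t).-1 < (maxn s t).-1)%N by lia.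
  by rewrite eqxx rel ?lt0n // rel ?lt0n.
have hv1 : comp_index H v != s by rewrite /s ci_eqE; apply/negP => h; rewrite h in inv.
have hv2 : comp_index H v != t by rewrite /t ci_eqE; apply/negP => h; rewrite h orbT in inv.
move=> pos; rewrite merge_nth -(rel v); last by move: pos; icases; lia.
move: pos; rewrite /bump'; icases; move=> pos; first [by [] | (exfalso; lia) | (congr nth; lia)].
Qed.

Lemma rep_uniq H (x y : Fobj tf H) st : Rep x st -> Rep y st -> x = y.
Proof.
move=> [l1 [[s1 r1] ->]] [l2 [[s2 r2] ->]]; congr tp_tens; apply: seqtof_ext => j.
case: (ltnP j (ncomp H).-1) => hj; last by rewrite !nth_default ?s1 ?s2.
have [v hv] : exists v, comp_index H v = j.+1 by apply: ci_surj; lia.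
by have := r1 v; have := r2 v; rewrite hv /= => <- // <-.
Qed.

Lemma rep_init H m (as_ : {ffun 'I_(ncomp H).-1 -> A}) :
  Rep (tp_tens (tf (ncomp H).-1) m as_ : Fobj tf H)
      (m, fun v => nth 0 (ftoseq as_) (comp_index H v).-1).
Proof.
exists (ftoseq as_); split; first by split=> //; rewrite size_ftoseq.
congr tp_tens; apply/ffunP => j; rewrite ffunE.
by have := ftoseq_nth as_ j.
Qed.

Lemma inv_init H (as_ : seq A) : Inv H (fun v => nth 0 as_ (comp_index H v).-1).
Proof. by move=> u v e; rewrite !ciE e. Qed.

Lemma inv_step H e st : Inv H st.2 -> Inv (e |: H) (mergeV H e st).2.
Proof.
move=> iv u v /eqP; rewrite -ccE cc_add /=.
case/or3P=> [/eqP h|/andP[/eqP h1 /eqP h2]|/andP[/eqP h1 /eqP h2]].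
- by rewrite h; case: ifP => // _; apply: iv.
- by rewrite h1 -h2 !eqxx ?orbT.
- by rewrite h1 -h2 !eqxx ?orbT.
Qed.

End Step.

End A3.
Import A3.

Module S5.
Import GRing.Theory.
Local Open Scope ring_scope.

Section Square.
Variables (R : comNzRingType) (A : algType R) (M : bimodule A).
Variable n : nat.
Local Notation Mc := (bm_car M).
Implicit Types (E H : {set 'I_n * 'I_n}) (e f : 'I_n * 'I_n).

Ltac bash := repeat (match goal with |- context [?x == ?y] =>
  is_var x; is_var y; case: (eqVneq x y) => [?|?]; try subst end).

Lemma square E H e f (st : Mc * ('I_n -> A)) :
  multipath E H -> multipath E (f |: (e |: H)) -> e \notin H -> f \notin H -> e != f ->
  Inv H st.2 ->
  mergeV (e |: H) f (mergeV H e st) = mergeV (f |: H) e (mergeV H f st).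
Proof.
move=> mH mG eH fH ef iv.
have mE : multipath E (e |: H) by apply: mp_sub mG _; apply: subsetUr.
have mF : multipath E (f |: H).
  by apply: mp_sub mG _; apply/subsetP => x; rewrite !inE => /orP[->|->]; rewrite ?orbT.
have ne := no_intra mH mE eH.
have nf := no_intra mH mF fH.
have ns := no_same_src mH mG eH fH ef.
have nt := no_same_tgt mH mG eH fH ef.
have nc := no_cycle2 mH mG eH fH ne.
have z0 : (0 < n)%N by case: (e.1) => /= k; case: n.
pose z := Ordinal z0.
have zz : val z = 0%N by [].
case: st iv => m sg /= iv.
have Ix x : sg x = sg (rt H x) by apply: iv; rewrite rt_idem.
rewrite /mergeV /= !(ci0 _ _ zz) -!ccE !cc_add !ccE.
congr pair.
  rewrite (Ix e.1) (Ix e.2) (Ix f.1) (Ix f.2).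
  move: ne nf ns nt nc; move: (rt H e.1) (rt H e.2) (rt H f.1) (rt H f.2) (rt H z) => P Q R' S Z.
  bash; move=> h1 h2 h3 h4 h5; rewrite ?eqxx /= in h1 h2 h3 h4 h5 *; try done;
    (try match goal with h : is_true (?x != ?x) |- _ => by rewrite eqxx in h end).
  all: try by rewrite ?mulrA ?ractA ?lactA ?lact_ract.
apply: functional_extensionality => v.
rewrite -!ccE !cc_add !ccE (Ix e.1) (Ix e.2) (Ix f.1) (Ix f.2) (Ix v).
move: ne nf ns nt nc; move: (rt H e.1) (rt H e.2) (rt H f.1) (rt H f.2) (rt H v) => P Q R' S V.
bash; move=> h1 h2 h3 h4 h5; rewrite ?eqxx /= in h1 h2 h3 h4 h5 *; try done;
  (try match goal with h : is_true (?x != ?x) |- _ => by rewrite eqxx in h end).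
all: by rewrite ?mulrA.
Qed.
End Square.

End S5.
Import S5.

Module F.
Import GRing.Theory.
Local Open Scope ring_scope.

Section Chains.
Variable n : nat.
Variable E : {set 'I_n * 'I_n}.
Implicit Types (H : {set 'I_n * 'I_n}) (e f : 'I_n * 'I_n) (es : seq ('I_n * 'I_n)).

Lemma chain_mp H es : is_chain E H es -> multipath E H.
Proof. by case: es => [|e es] //= [] . Qed.

Lemma chain_endE H es : chain_end H es = H :|: [set x in es].
Proof.
elim: es H => [|e es IH] H /=; first by apply/setP => x; rewrite !inE orbF.
rewrite IH; apply/setP => x; rewrite !inE; by case: (x == e); rewrite ?orbT.
Qed.

Lemma chain_disj H es : is_chain E H es -> uniq es /\ forall x, x \in es -> x \notin H.
Proof.
elim: es H => [|e es IH] H //= [_ eH /IH [u d]]; split.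
  rewrite u andbT; apply/negP => /d; by rewrite !inE eqxx.
move=> x; rewrite inE => /orP[/eqP -> //|/d]; rewrite !inE negb_or => /andP[].
by [].
Qed.

Lemma chain_end_mp H es : is_chain E H es -> multipath E (chain_end H es).
Proof. by elim: es H => [|e es IH] H //= [_ _ /IH]. Qed.

Lemma chain_size H es : is_chain E H es -> size es = #|chain_end H es :\: H|.
Proof.
move=> /chain_disj [u d].
rewrite chain_endE (_ : (H :|: [set x in es]) :\: H = [set x in es]).
  by rewrite cardsE (card_uniqP u).
apply/setP => x; rewrite !inE; case xe: (x \in es); last by rewrite orbF andNb.
by rewrite (negPf (d _ xe)).
Qed.

Lemma chain_of_list s H H' : uniq s -> (forall x, x \in s -> (x \in H') && (x \notin H)) ->
  H \subset H' -> multipath E H' -> is_chain E H s.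
Proof.
move=> + + + mH'; elim: s H => [|e s IH] H /=.
  by move=> _ _ sub; exact: mp_sub mH' sub.
move=> /andP[es us] hs sub.
have /andP[eH' eH] := hs e (mem_head _ _).
have sub' : e |: H \subset H' by rewrite subUset sub1set eH' sub.
split=> //; first exact: mp_sub mH' sub.
apply: IH => // x xs; have /andP[-> xH] := hs x (mem_behead (s := e :: s) xs); rewrite !inE negb_or xH andbT /=.
by apply/negP => /eqP xe; rewrite -xe xs in es.
Qed.

Lemma chain_exists H H' : multipath E H -> multipath E H' -> H \subset H' ->
  exists es, is_chain E H es /\ chain_end H es = H'.
Proof.
move=> mH mH' sub; exists (enum (H' :\: H)); split; last first.
  rewrite chain_endE; apply/setP => x; rewrite !inE mem_enum !inE.
  by case xH: (x \in H); rewrite ?(subsetP sub _ xH) //= orbF.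
apply: (chain_of_list (H' := H')) => //; first exact: enum_uniq.
by move=> x; rewrite mem_enum !inE andbC.
Qed.

Lemma chain_cat H es1 es2 : is_chain E H es1 -> is_chain E (chain_end H es1) es2 ->
  is_chain E H (es1 ++ es2).
Proof.
elim: es1 H => [|e es IH] H //= [mH eH c] c2; split=> //; exact: IH.
Qed.

End Chains.

Section Main.
Variables (R : comNzRingType) (A : algType R) (M : bimodule A).
Variable tf : forall k : nat, tensor_power (bm_car M) A k.
Variable n : nat.
Variable E : {set 'I_n * 'I_n}.
Local Notation Mc := (bm_car M).
Implicit Types (H K : {set 'I_n * 'I_n}) (e f : 'I_n * 'I_n) (es : seq ('I_n * 'I_n)).

Fixpoint PhiV H es (st : Mc * ('I_n -> A)) : Mc * ('I_n -> A) :=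
  match es with
  | [::] => st
  | e :: es' => PhiV (e |: H) es' (mergeV H e st)
  end.

Lemma PhiV_cat H es1 es2 st : PhiV H (es1 ++ es2) st = PhiV (chain_end H es1) es2 (PhiV H es1 st).
Proof. by elim: es1 H st => [|e es IH] H st //=. Qed.

Lemma inv_chain H es st : Inv H st.2 -> Inv (chain_end H es) (PhiV H es st).2.
Proof. by elim: es H st => [|e es IH] H st //= iv; apply: IH; apply: inv_step. Qed.

Lemma diamond (k : nat) : forall H es1 es2 (st : Mc * ('I_n -> A)), (size es1 <= k)%N -> is_chain E H es1 -> is_chain E H es2 ->
  chain_end H es1 = chain_end H es2 -> Inv H st.2 -> PhiV H es1 st = PhiV H es2 st.
Proof.
elim: k => [|k IH] H es1 es2 st.
  case: es1 => // _ c1 c2; rewrite /= => he.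
  case: es2 c2 he => [//|f r2] c2 he.
  have [_ d] := chain_disj c2.
  have : f \in chain_end H (f :: r2) by rewrite chain_endE !inE eqxx !orbT.
  by rewrite -he /= (negPf (d f (mem_head _ _))).
case: es1 => [|e r1] sz c1 c2 he iv.
  case: es2 c2 he => [//|f r2] c2 he.
  have [_ d] := chain_disj c2.
  have : f \in chain_end H (f :: r2) by rewrite chain_endE !inE eqxx !orbT.
  by rewrite -he /= (negPf (d f (mem_head _ _))).
case: es2 c2 he => [|f r2] c2 he.
  have [_ d] := chain_disj c1.
  have : e \in chain_end H (e :: r1) by rewrite chain_endE !inE eqxx !orbT.
  by rewrite he /= (negPf (d e (mem_head _ _))).
have [mH eH c1'] := c1; have [_ fH c2'] := c2.
case: (eqVneq e f) => [ef|ef].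
  subst f; rewrite /=; apply: IH => //; exact: inv_step.
set H' := chain_end H (e :: r1).
have mH' : multipath E H' := chain_end_mp c1.
have sub : f |: (e |: H) \subset H'.
  have fin : f \in chain_end H (f :: r2) by rewrite chain_endE !inE eqxx !orbT.
  rewrite -he in fin.
  rewrite subUset sub1set fin subUset sub1set /H' chain_endE !inE eqxx !orbT /=.
  by rewrite subsetUl.
have mG := mp_sub mH' sub.
have [rest [crest erest]] := chain_exists (mp_sub mH' sub) mH' sub.
have mE : multipath E (e |: H) := chain_mp c1'.
have mF : multipath E (f |: H) := chain_mp c2'.
have fe : f \notin e |: H by rewrite !inE negb_or eq_sym ef.
have ef' : e \notin f |: H by rewrite !inE negb_or ef.
have swap : f |: (e |: H) = e |: (f |: H) by rewrite setUCA.
have sz2 : size r2 = size r1.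
  have := chain_size c1; have := chain_size c2; rewrite -he /= => h2 h1; lia.
have iE : Inv (e |: H) (mergeV H e st).2 by apply: inv_step.
have iF : Inv (f |: H) (mergeV H f st).2 by apply: inv_step.
rewrite /=.
have e1 : PhiV (e |: H) r1 (mergeV H e st) = PhiV (e |: H) (f :: rest) (mergeV H e st).
  by apply: IH => //.
have e2 : PhiV (f |: H) r2 (mergeV H f st) = PhiV (f |: H) (e :: rest) (mergeV H f st).
  apply: IH => //; first by rewrite sz2; rewrite /= ltnS in sz.
    by split=> //; rewrite -swap.
  by rewrite /= -swap erest.
rewrite e1 e2 /= -swap (square mH mG eH fH ef iv).
by [].
Qed.

Lemma chain_rep H es (x : Fobj tf H) st : is_chain E H es -> Inv H st.2 -> Rep x st ->
  Rep (chain_comp es x) (PhiV H es st).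
Proof.
elim: es H x st => [|e es IH] H x st //= [mH eH c] iv rx.
apply: IH => //; first exact: inv_step.
apply: step_rep => //; exact: no_intra mH (chain_mp c) eH.
Qed.

Lemma chain_lin H es : is_chain E H es -> is_linear (@chain_comp R A M tf n H es).
Proof.
elim: es H => [|e es IH] H /=; first by move=> _ r x y.
move=> [mH eH c]; apply: lin_comp (IH _ c).
by have [] := cover_ok tf (no_intra mH (chain_mp c) eH).
Qed.

Lemma lin_eq_pure H K (g1 g2 : Fobj tf H -> Fobj tf K) : is_linear g1 -> is_linear g2 ->
  (forall m as_, g1 (tp_tens (tf (ncomp H).-1) m as_) = g2 (tp_tens (tf (ncomp H).-1) m as_)) ->
  g1 =1 g2.
Proof.
move=> l1 l2 e.
have [ml1 ml2] := tp_multilinear (tf (ncomp H).-1).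
have ml : multilinear (fun m as_ => g1 (tp_tens (tf (ncomp H).-1) m as_)).
  split; first by move=> as_; apply: lin_comp (ml1 as_) l1.
  by move=> m as_ i; apply: lin_comp (ml2 m as_ i) l1.
have [g [_ _ uq]] := tp_universal (tf (ncomp H).-1) ml.
move=> x; rewrite (uq g1) // (uq g2) //.
Qed.

Definition tr H (K1 K2 : {set 'I_n * 'I_n}) (p : K1 = K2) (g : Fobj tf H -> Fobj tf K1) : Fobj tf H -> Fobj tf K2 :=
  eq_rect K1 (fun K => Fobj tf H -> Fobj tf K) g K2 p.

Lemma tr_rep H (K1 K2 : {set 'I_n * 'I_n}) (p : K1 = K2) (g : Fobj tf H -> Fobj tf K1) x st :
  Rep (g x) st -> Rep (tr p g x) st.
Proof. by case: K2 / p. Qed.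

Lemma tr_lin H (K1 K2 : {set 'I_n * 'I_n}) (p : K1 = K2) (g : Fobj tf H -> Fobj tf K1) :
  is_linear g -> is_linear (tr p g).
Proof. by case: K2 / p. Qed.

Definition Fmor H (H' : {set 'I_n * 'I_n}) : Fobj tf H -> Fobj tf H' :=
  epsilon (inhabits (fun _ => 0)) (fun g => exists es (p : chain_end H es = H'),
     is_chain E H es /\ g = tr p (chain_comp es)).
Arguments Fmor : clear implicits.

Lemma FmorP H (H' : {set 'I_n * 'I_n}) es : is_chain E H es -> chain_end H es = H' ->
  exists es' (p : chain_end H es' = H'), is_chain E H es' /\ Fmor H H' = tr p (chain_comp es').
Proof.
move=> c p; apply: (@epsilon_spec _ _ (fun g => exists es (p : chain_end H es = H'),
     is_chain E H es /\ g = tr p (chain_comp es))).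
by exists (tr p (chain_comp es)), es, p.
Qed.

Lemma Fmor_rep H (H' : {set 'I_n * 'I_n}) es (x : Fobj tf H) st : is_chain E H es -> chain_end H es = H' ->
  Inv H st.2 -> Rep x st -> Rep (Fmor H H' x) (PhiV H es st).
Proof.
move=> c p iv rx; have [es' [p' [c' ->]]] := FmorP c p.
apply: tr_rep; rewrite -(@diamond (size es') H es' es st) //; first exact: chain_rep.
by rewrite p p'.
Qed.

Lemma Fmor_lin H (H' : {set 'I_n * 'I_n}) es : is_chain E H es -> chain_end H es = H' -> is_linear (Fmor H H').
Proof.
move=> c p; have [es' [p' [c' ->]]] := FmorP c p.
exact/tr_lin/chain_lin.
Qed.

Lemma Fmor_chain H es : is_chain E H es -> Fmor H (chain_end H es) =1 chain_comp es.
Proof.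
move=> c; apply: lin_eq_pure; first exact: Fmor_lin c erefl.
  exact: chain_lin.
move=> m as_.
have ri := @rep_init R A M tf n H m as_.
have ii := @inv_init R A n H (ftoseq as_).
set s0 := (m, fun v => nth 0 (ftoseq as_) (comp_index H v).-1).
have h1 := Fmor_rep (st := s0) c erefl ii ri.
have h2 := chain_rep (st := s0) c ii ri.
exact: rep_uniq h1 h2.
Qed.

End Main.

End F.
Import F.


Theorem proposition4p8 (n : nat) (E : {set 'I_n * 'I_n}) (HG : digraph E)
  (R : comNzRingType) (A : algType R) (M : bimodule A)
  (tf : forall k : nat, tensor_power (bm_car M) A k) :
  (* every H <= H' is joined by a chain of coverings *)
  (forall H H' : {set 'I_n * 'I_n}, multipath E H -> multipath E H' ->
     H \subset H' -> exists es, is_chain E H es /\ chain_end H es = H') /\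
  exists Fmor : forall H H' : {set 'I_n * 'I_n}, Fobj tf H -> Fobj tf H',
    (* well defined: the composite along any chain is Fmor H H' *)
    [/\ (forall H es, is_chain E H es ->
           Fmor H (chain_end H es) =1 @chain_comp R A M tf n H es),
        (* R-linear maps *)
        (forall H H', multipath E H -> multipath E H' -> H \subset H' ->
           is_linear (Fmor H H')),
        (* functor: identities *)
        (forall H, multipath E H -> Fmor H H =1 id) &
        (* functor: composition *)
        (forall H1 H2 H3, multipath E H1 -> multipath E H2 -> multipath E H3 ->
           H1 \subset H2 -> H2 \subset H3 ->
           Fmor H1 H3 =1 Fmor H2 H3 \o Fmor H1 H2)].
Proof.
split.
  by move=> H H' mH mH' sub; exact: chain_exists.
exists (fun H H' => @Fmor R A M tf n E H H'); split.
- by move=> H es c; exact: Fmor_chain.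
- move=> H H' mH mH' sub; have [es [c p]] := chain_exists mH mH' sub.
  exact: Fmor_lin c p.
- by move=> H mH; exact: (@Fmor_chain R A M tf n E H [::] mH).
move=> H1 H2 H3 m1 m2 m3 s12 s23.
have [es12 [c12 p12]] := chain_exists m1 m2 s12.
have [es23 [c23 p23]] := chain_exists m2 m3 s23.
subst H2 H3.
have c13 := chain_cat c12 c23.
have e13 : chain_end H1 (es12 ++ es23) = chain_end (chain_end H1 es12) es23.
  by rewrite /chain_end foldl_cat.
apply: lin_eq_pure.
- exact: Fmor_lin c13 e13.
- apply: A2.lin_comp; [exact: Fmor_lin c12 erefl | exact: Fmor_lin c23 erefl].
move=> m as_.
have ri := @rep_init R A M tf n H1 m as_.
have ii := @inv_init R A n H1 (ftoseq as_).
set s0 := (m, fun v => nth 0%R (ftoseq as_) (comp_index H1 v).-1).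
have h1 := Fmor_rep (st := s0) c13 e13 ii ri.
have i1 := inv_chain (st := s0) (es := es12) ii.
have h2 := Fmor_rep (st := s0) c12 erefl ii ri.
have h3 := Fmor_rep c23 erefl i1 h2.
rewrite PhiV_cat in h1.
exact: rep_uniq h1 h3.
Qed.
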